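(* Fix $L>0$. For parameters $a,b$ call a barrier a pair $(\phi,\psi)$ solving $$-\phi''=\phi(1-\phi-a\psi),\quad -\psi''=\psi(1-b\phi-\psi)\ \text{ in }(0,L),\qquad \phi(0)=\phi(L)=0,\ \psi(0)=\psi(L)=1,$$ with $0<\phi(x)<1$ and $0<\psi(x)<1$ for all $x\in(0,L)$. Let $(a_n,b_n)_{n\in\mathbb{N}}$ be a sequence with $a_n>0$ and $b_n>\max\{a_n,1\}$ for all $n$, such that a barrier exists for the parameters $a_n,b_n$ for every $n$. Suppose $(a_n,b_n)\to(a,b)$ where $a>0$, $b>\max\{a,1\}$ and $a>1$. Then a barrier exists for the parameters $a,b$. *)

(* Defs.v *)
From Stdlib Require Import Reals.
From Coquelicot Require Import Coquelicot.
Open Scope R_scope.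

Definition cont_on_closed (L : R) (f : R -> R) : Prop :=
  forall x, 0 <= x <= L ->
    filterlim f (within (fun y => 0 <= y <= L) (locally x)) (locally (f x)).

Definition twice_diff_on_open (L : R) (f f' f'' : R -> R) : Prop :=
  forall x, 0 < x < L -> is_derive f x (f' x) /\ is_derive f' x (f'' x).

Definition barrier (L a b : R) (phi psi : R -> R) : Prop :=
  cont_on_closed L phi /\ cont_on_closed L psi /\
  exists phi' phi'' psi' psi'' : R -> R,
    twice_diff_on_open L phi phi' phi'' /\
    twice_diff_on_open L psi psi' psi'' /\
    (forall x, 0 < x < L ->
        - phi'' x = phi x * (1 - phi x - a * psi x) /\
        - psi'' x = psi x * (1 - b * phi x - psi x)) /\
    phi 0 = 0 /\ phi L = 0 /\ psi 0 = 1 /\ psi L = 1 /\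
    (forall x, 0 < x < L -> 0 < phi x < 1 /\ 0 < psi x < 1).

Definition barrier_exists (L a b : R) : Prop :=
  exists phi psi : R -> R, barrier L a b phi psi.

(* Main.v *)
Require Import Defs.
From Stdlib Require Import Reals Lra Lia ClassicalEpsilon Cantor.
From Coquelicot Require Import Coquelicot.
Open Scope R_scope.


Lemma mvt_in (L : R) (f df : R -> R) (u v : R) :
  (forall x, 0 < x < L -> is_derive f x (df x)) -> 0 < u < L -> 0 < v < L ->
  exists c, 0 < c < L /\ Rmin u v <= c <= Rmax u v /\ f v - f u = df c * (v - u).
Proof.
  intros Hd Hu Hv.
  assert (Hmin : 0 < Rmin u v) by (unfold Rmin; destruct (Rle_dec u v); lra).
  assert (Hmax : Rmax u v < L) by (unfold Rmax; destruct (Rle_dec u v); lra).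
  destruct (MVT_gen f u v df) as [c [Hc Heq]].
  - intros x Hx. apply Hd. simpl in Hx. lra.
  - intros x Hx. simpl in Hx. apply continuity_pt_filterlim.
    apply (ex_derive_continuous f x). exists (df x). apply Hd. lra.
  - exists c. simpl in Hc. split; [lra|split;[lra|exact Heq]].
Qed.

Lemma lip_of_deriv (L C : R) (f df : R -> R) :
  (forall x, 0 < x < L -> is_derive f x (df x)) ->
  (forall x, 0 < x < L -> Rabs (df x) <= C) ->
  forall x y, 0 < x < L -> 0 < y < L -> Rabs (f x - f y) <= C * Rabs (x - y).
Proof.
  intros Hd Hb x y Hx Hy.
  destruct (mvt_in L f df y x Hd Hy Hx) as [c [Hc [_ Heq]]].
  rewrite Heq, Rabs_mult. apply Rmult_le_compat_r. apply Rabs_pos. apply Hb; lra.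
Qed.

Lemma taylor1 (L C : R) (f df : R -> R) : 0 <= C ->
  (forall x, 0 < x < L -> is_derive f x (df x)) ->
  (forall u v, 0 < u < L -> 0 < v < L -> Rabs (df u - df v) <= C * Rabs (u - v)) ->
  forall x y, 0 < x < L -> 0 < y < L ->
    Rabs (f y - f x - df x * (y - x)) <= C * Rabs (y - x) * Rabs (y - x).
Proof.
  intros HC Hd Hl x y Hx Hy.
  destruct (mvt_in L f df x y Hd Hx Hy) as [c [Hc [Hcb Heq]]].
  rewrite Heq.
  replace (df c * (y - x) - df x * (y - x)) with ((df c - df x) * (y - x)) by ring.
  rewrite Rabs_mult. apply Rmult_le_compat_r. apply Rabs_pos.
  eapply Rle_trans. apply Hl; lra.
  apply Rmult_le_compat_l. lra.
  unfold Rmin, Rmax in Hcb. destruct (Rle_dec x y);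
  unfold Rabs; destruct (Rcase_abs _); destruct (Rcase_abs _); lra.
Qed.



Lemma deriv_of_quad (L C : R) (F : R -> R) (x G : R) : 0 <= C -> 0 < x < L ->
  (forall y, 0 < y < L -> Rabs (F y - F x - G * (y - x)) <= C * Rabs (y - x) * Rabs (y - x)) ->
  is_derive F x G.
Proof.
  intros HC Hx Hq. apply is_derive_Reals. intros eps Heps.
  assert (Hd : 0 < Rmin (Rmin x (L - x)) (eps / (C + 1))).
  { apply Rmin_pos. apply Rmin_pos; lra. apply Rdiv_lt_0_compat; lra. }
  exists (mkposreal _ Hd). intros h Hh0 Hh. simpl in Hh.
  assert (H1 : Rabs h < x) by (eapply Rlt_le_trans; [exact Hh|]; eapply Rle_trans; [apply Rmin_l|apply Rmin_l]).
  assert (H2 : Rabs h < L - x) by (eapply Rlt_le_trans; [exact Hh|]; eapply Rle_trans; [apply Rmin_l|apply Rmin_r]).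
  assert (H3 : Rabs h < eps / (C + 1)) by (eapply Rlt_le_trans; [exact Hh|apply Rmin_r]).
  assert (Hy : 0 < x + h < L) by (unfold Rabs in *; destruct (Rcase_abs h); lra).
  specialize (Hq (x + h) Hy). replace (x + h - x) with h in Hq by ring.
  replace ((F (x + h) - F x) / h - G) with ((F (x + h) - F x - G * h) / h) by (field; auto).
  rewrite Rabs_div by auto.
  assert (Hah : 0 < Rabs h) by (apply Rabs_pos_lt; auto).
  apply Rlt_div_l; [lra|].
  eapply Rle_lt_trans; [exact Hq|].
  apply Rmult_lt_compat_r; [exact Hah|].
  apply Rlt_div_r in H3; [|lra].
  assert (C * Rabs h <= Rabs h * (C + 1)) by nra. nra.
Qed.

Lemma lip_cont (L M : R) (f : R -> R) : 0 <= M ->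
  (forall x y, 0 <= x <= L -> 0 <= y <= L -> Rabs (f x - f y) <= M * Rabs (x - y)) ->
  cont_on_closed L f.
Proof.
  intros HM Hl x Hx. apply filterlim_locally. intros eps.
  assert (Hd : 0 < eps / (M + 1)) by (apply Rdiv_lt_0_compat; [apply cond_pos|lra]).
  exists (mkposreal _ Hd). intros y Hy Hyd. simpl in Hy.
  change (Rabs (f y - f x) < eps).
  change (Rabs (y - x) < eps / (M + 1)) in Hy.
  eapply Rle_lt_trans. apply Hl; auto.
  apply Rlt_div_r in Hy; [|lra].
  pose proof (cond_pos eps). pose proof (Rabs_pos (y - x)). nra.
Qed.



Lemma approx_in (L : R) (f : R -> R) (x eps : R) : 0 < L -> cont_on_closed L f ->
  0 <= x <= L -> 0 < eps -> exists x', 0 < x' < L /\ Rabs (x' - x) < eps /\ Rabs (f x' - f x) < eps.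
Proof.
  intros HL Hc Hx He.
  destruct (proj1 (filterlim_locally f (f x)) (Hc x Hx) (mkposreal _ He)) as [d Hd].
  set (m := Rmin d eps).
  assert (Hm : 0 < m) by (apply Rmin_pos; [apply cond_pos|lra]).
  assert (Hm1 : m <= d) by apply Rmin_l. assert (Hm2 : m <= eps) by apply Rmin_r.
  set (t := Rmin (1/2) (m / (2 * (L + 1)))).
  assert (Ht : 0 < t) by (apply Rmin_pos; [lra|apply Rdiv_lt_0_compat; lra]).
  assert (Ht1 : t <= 1/2) by apply Rmin_l.
  assert (Ht2 : t <= m / (2 * (L + 1))) by apply Rmin_r.
  assert (Ht3 : t * (2 * (L + 1)) <= m) by (apply Rle_div_r in Ht2; lra).
  exists (x + t * (L/2 - x)).
  assert (Hdist : Rabs (x + t * (L / 2 - x) - x) < m).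
  { replace (x + t * (L / 2 - x) - x) with (t * (L/2 - x)) by ring.
    rewrite Rabs_mult, (Rabs_pos_eq t) by lra.
    assert (Rabs (L/2 - x) <= L/2) by (unfold Rabs; destruct (Rcase_abs _); lra).
    nra. }
  split; [nra|split; [lra|]].
  apply (Hd (x + t * (L/2 - x))).
  - change (Rabs (x + t * (L / 2 - x) - x) < d). lra.
  - nra.
Qed.

Lemma lip_ext (L M : R) (f : R -> R) : 0 < L -> 0 <= M -> cont_on_closed L f ->
  (forall x y, 0 < x < L -> 0 < y < L -> Rabs (f x - f y) <= M * Rabs (x - y)) ->
  forall x y, 0 <= x <= L -> 0 <= y <= L -> Rabs (f x - f y) <= M * Rabs (x - y).
Proof.
  intros HL HM Hc Hl x y Hx Hy.
  apply Rle_plus_epsilon. intros e He.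
  set (e' := e / (2 * M + 3)).
  assert (He' : 0 < e') by (apply Rdiv_lt_0_compat; lra).
  assert (He'2 : e' * (2 * M + 3) = e) by (unfold e'; field; lra).
  destruct (approx_in L f x e' HL Hc Hx He') as [x' [Hx' [Hx1 Hx2]]].
  destruct (approx_in L f y e' HL Hc Hy He') as [y' [Hy' [Hy1 Hy2]]].
  specialize (Hl x' y' Hx' Hy').
  assert (Rabs (x' - y') <= Rabs (x - y) + 2 * e').
  { unfold Rabs in *; repeat destruct (Rcase_abs _); lra. }
  assert (Rabs (f x - f y) <= Rabs (f x' - f y') + 2 * e').
  { unfold Rabs in *; repeat destruct (Rcase_abs _); lra. }
  nra.
Qed.




Lemma pos_of_prod (a t : R) : 0 < t -> 0 < a * t -> 0 < a.
Proof. intros. nra. Qed.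

Lemma bump_down (L : R) (f f' f'' : R -> R) (x0 : R) : 0 < L -> cont_on_closed L f ->
  twice_diff_on_open L f f' f'' -> 0 < x0 < L -> f 0 < f x0 -> f L < f x0 ->
  exists c, 0 < c < L /\ f'' c < 0.
Proof.
  intros HL Hc Hd Hx H0 H1.
  assert (Hd1 : forall x, 0 < x < L -> is_derive f x (f' x)) by (intros; apply Hd; auto).
  assert (Hd2 : forall x, 0 < x < L -> is_derive f' x (f'' x)) by (intros; apply Hd; auto).
  destruct (approx_in L f 0 (Rmin x0 (f x0 - f 0)) HL Hc) as [e [He [He1 He2]]].
  lra. apply Rmin_pos; lra.
  assert (e < x0) by (pose proof (Rmin_l x0 (f x0 - f 0)); unfold Rabs in He1; destruct (Rcase_abs _); lra).
  assert (f e < f x0) by (pose proof (Rmin_r x0 (f x0 - f 0)); unfold Rabs in He2; destruct (Rcase_abs _); lra).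
  destruct (approx_in L f L (Rmin (L - x0) (f x0 - f L)) HL Hc) as [g [Hg [Hg1 Hg2]]].
  lra. apply Rmin_pos; lra.
  assert (x0 < g) by (pose proof (Rmin_l (L - x0) (f x0 - f L)); unfold Rabs in Hg1; destruct (Rcase_abs _); lra).
  assert (f g < f x0) by (pose proof (Rmin_r (L - x0) (f x0 - f L)); unfold Rabs in Hg2; destruct (Rcase_abs _); lra).
  destruct (mvt_in L f f' e x0 Hd1 He Hx) as [c1 [Hc1 [Hb1 Heq1]]].
  destruct (mvt_in L f f' x0 g Hd1 Hx Hg) as [c2 [Hc2 [Hb2 Heq2]]].
  rewrite Rmin_left, Rmax_right in Hb1 by lra.
  rewrite Rmin_left, Rmax_right in Hb2 by lra.
  assert (P1 : 0 < f' c1) by (apply (pos_of_prod _ (x0 - e)); lra).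
  assert (P2 : 0 < - f' c2) by (apply (pos_of_prod _ (g - x0)); lra).
  assert (c1 < c2).
  { destruct (Req_dec c1 c2) as [E|E]. subst. lra. lra. }
  destruct (mvt_in L f' f'' c1 c2 Hd2 Hc1 Hc2) as [c3 [Hc3 [Hb3 Heq3]]].
  exists c3. split; auto.
  assert (0 < - f'' c3 * (c2 - c1)) by lra.
  apply Ropp_lt_cancel. rewrite Ropp_0. apply (pos_of_prod _ (c2 - c1)); lra.
Qed.

Lemma bump_up (L : R) (f f' f'' : R -> R) (x0 : R) : 0 < L -> cont_on_closed L f ->
  twice_diff_on_open L f f' f'' -> 0 < x0 < L -> f x0 < f 0 -> f x0 < f L ->
  exists c, 0 < c < L /\ 0 < f'' c.
Proof.
  intros HL Hc Hd Hx H0 H1.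
  assert (Hd1 : forall x, 0 < x < L -> is_derive f x (f' x)) by (intros; apply Hd; auto).
  assert (Hd2 : forall x, 0 < x < L -> is_derive f' x (f'' x)) by (intros; apply Hd; auto).
  destruct (approx_in L f 0 (Rmin x0 (f 0 - f x0)) HL Hc) as [e [He [He1 He2]]].
  lra. apply Rmin_pos; lra.
  assert (e < x0) by (pose proof (Rmin_l x0 (f 0 - f x0)); unfold Rabs in He1; destruct (Rcase_abs _); lra).
  assert (f x0 < f e) by (pose proof (Rmin_r x0 (f 0 - f x0)); unfold Rabs in He2; destruct (Rcase_abs _); lra).
  destruct (approx_in L f L (Rmin (L - x0) (f L - f x0)) HL Hc) as [g [Hg [Hg1 Hg2]]].
  lra. apply Rmin_pos; lra.
  assert (x0 < g) by (pose proof (Rmin_l (L - x0) (f L - f x0)); unfold Rabs in Hg1; destruct (Rcase_abs _); lra).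
  assert (f x0 < f g) by (pose proof (Rmin_r (L - x0) (f L - f x0)); unfold Rabs in Hg2; destruct (Rcase_abs _); lra).
  destruct (mvt_in L f f' e x0 Hd1 He Hx) as [c1 [Hc1 [Hb1 Heq1]]].
  destruct (mvt_in L f f' x0 g Hd1 Hx Hg) as [c2 [Hc2 [Hb2 Heq2]]].
  rewrite Rmin_left, Rmax_right in Hb1 by lra.
  rewrite Rmin_left, Rmax_right in Hb2 by lra.
  assert (P1 : 0 < - f' c1) by (apply (pos_of_prod _ (x0 - e)); lra).
  assert (P2 : 0 < f' c2) by (apply (pos_of_prod _ (g - x0)); lra).
  assert (c1 < c2).
  { destruct (Req_dec c1 c2) as [E|E]. subst. lra. lra. }
  destruct (mvt_in L f' f'' c1 c2 Hd2 Hc1 Hc2) as [c3 [Hc3 [Hb3 Heq3]]].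
  exists c3. split; auto.
  apply (pos_of_prod _ (c2 - c1)); lra.
Qed.

Lemma deriv_min0 (L : R) (f : R -> R) (x0 l : R) : 0 < x0 < L -> is_derive f x0 l ->
  (forall x, 0 < x < L -> f x0 <= f x) -> l = 0.
Proof.
  intros Hx Hd Hm. apply is_derive_Reals in Hd.
  assert (pr : derivable_pt f x0) by (exists l; exact Hd).
  rewrite <- (derive_pt_eq_0 f x0 l pr Hd).
  apply (deriv_minimum f 0 L); try lra. intros; apply Hm; lra.
Qed.

Lemma deriv_max0 (L : R) (f : R -> R) (x0 l : R) : 0 < x0 < L -> is_derive f x0 l ->
  (forall x, 0 < x < L -> f x <= f x0) -> l = 0.
Proof.
  intros Hx Hd Hm. apply is_derive_Reals in Hd.
  assert (pr : derivable_pt f x0) by (exists l; exact Hd).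
  rewrite <- (derive_pt_eq_0 f x0 l pr Hd).
  apply (deriv_maximum f 0 L); try lra. intros; apply Hm; lra.
Qed.

Lemma second_test (L : R) (f f' : R -> R) (x0 D : R) : 0 < x0 < L ->
  (forall x, 0 < x < L -> is_derive f x (f' x)) -> is_derive f' x0 D -> 0 < D -> f' x0 = 0 ->
  exists x, 0 < x < L /\ f x0 < f x.
Proof.
  intros Hx Hd H2 HD H0. apply is_derive_Reals in H2.
  destruct (H2 (D/2)) as [d Hdd]. lra.
  assert (Hpos : forall t, 0 < t < d -> 0 < f' (x0 + t)).
  { intros t Ht. assert (t <> 0) by lra.
    assert (Rabs t < d) by (rewrite Rabs_pos_eq; lra).
    specialize (Hdd t H H1). rewrite H0 in Hdd.
    replace ((f' (x0 + t) - 0) / t) with (f' (x0 + t) / t) in Hdd by (field; auto).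
    assert (0 < f' (x0 + t) / t) by (unfold Rabs in Hdd; destruct (Rcase_abs _); lra).
    apply (pos_of_prod _ (/ t)). apply Rinv_0_lt_compat; lra. exact H3. }
  set (h := Rmin d (L - x0) / 2).
  assert (Hh : 0 < h) by (unfold h; apply Rdiv_lt_0_compat; [apply Rmin_pos; [apply cond_pos|lra]|lra]).
  assert (Hh1 : h < d) by (unfold h; pose proof (Rmin_l d (L - x0)); pose proof (cond_pos d); lra).
  assert (Hh2 : h < L - x0) by (unfold h; pose proof (Rmin_r d (L - x0)); lra).
  exists (x0 + h). split. lra.
  assert (Hm : 0 < x0 + h/2 < L) by lra. assert (Hm2 : 0 < x0 + h < L) by lra.
  destruct (mvt_in L f f' (x0 + h/2) (x0 + h) Hd Hm Hm2) as [c1 [Hc1 [Hb1 E1]]].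
  rewrite Rmin_left, Rmax_right in Hb1 by lra.
  destruct (mvt_in L f f' x0 (x0 + h/2) Hd Hx Hm) as [c2 [Hc2 [Hb2 E2]]].
  rewrite Rmin_left, Rmax_right in Hb2 by lra.
  assert (0 < f' c1) by (replace c1 with (x0 + (c1 - x0)) by ring; apply Hpos; lra).
  assert (0 <= f' c2).
  { destruct (Req_dec c2 x0) as [E|E]. subst; lra.
    left; replace c2 with (x0 + (c2 - x0)) by ring; apply Hpos; lra. }
  nra.
Qed.




Lemma is_derive_eq (f : R -> R) x l l' : is_derive f x l -> l = l' -> is_derive f x l'.
Proof. intros H ->; exact H. Qed.

Lemma uniq_lin (L K : R) (f f' f'' : R -> R) (x0 : R) : 0 <= K ->
  twice_diff_on_open L f f' f'' -> (forall x, 0 < x < L -> Rabs (f'' x) <= K * Rabs (f x)) ->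
  0 < x0 < L -> f x0 = 0 -> f' x0 = 0 -> forall x, 0 < x < L -> f x = 0.
Proof.
  intros HK Hd Hb Hx0 F0 F1 x Hx.
  set (C := 1 + K).
  set (E := fun y => f y * f y + f' y * f' y).
  set (E' := fun y => 2 * f y * f' y + 2 * f' y * f'' y).
  assert (HE : forall y, 0 < y < L -> is_derive E y (E' y)).
  { intros y Hy. destruct (Hd y Hy) as [D1 D2].
    unfold E, E'. eapply is_derive_eq.
    apply (is_derive_plus (fun y => f y * f y) (fun y => f' y * f' y)).
    apply (is_derive_mult f f); [exact D1|exact D1|intros; apply Rmult_comm].
    apply (is_derive_mult f' f'); [exact D2|exact D2|intros; apply Rmult_comm].
    unfold plus, mult; simpl. ring. }
  assert (Hb2 : forall y, 0 < y < L -> Rabs (E' y) <= C * E y).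
  { intros y Hy. specialize (Hb y Hy). unfold E, E', C.
    assert (Rabs (f' y * f'' y) <= K * (Rabs (f y) * Rabs (f' y))).
    { rewrite Rabs_mult. pose proof (Rabs_pos (f' y)). nra. }
    assert (2 * Rabs (f y) * Rabs (f' y) <= f y * f y + f' y * f' y).
    { pose proof (Rsqr_abs (f y)); pose proof (Rsqr_abs (f' y)). unfold Rsqr in *.
      pose proof (pow2_ge_0 (Rabs (f y) - Rabs (f' y))). nra. }
    assert (Rabs (2 * f y * f' y + 2 * f' y * f'' y) <= 2 * Rabs (f y) * Rabs (f' y) + 2 * Rabs (f' y * f'' y)).
    { eapply Rle_trans. apply Rabs_triang. rewrite !Rabs_mult. rewrite (Rabs_pos_eq 2) by lra. lra. }
    nra. }
  assert (E0 : E x0 = 0) by (unfold E; rewrite F0, F1; ring).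
  assert (Epos : E x <= 0 -> f x = 0).
  { unfold E; intros. pose proof (pow2_ge_0 (f' x)). pose proof (pow2_ge_0 (f x)).
    simpl in *. nra. }
  apply Epos.
  destruct (Rle_dec x0 x) as [Hle|Hlt].
  - set (G := fun y => E y * exp (- C * y)).
    assert (HG : forall y, 0 < y < L -> is_derive G y ((E' y - C * E y) * exp (- C * y))).
    { intros y Hy. unfold G. eapply is_derive_eq.
      apply (is_derive_mult E (fun y => exp (- C * y))). apply HE; auto.
      auto_derive; auto. intros; apply Rmult_comm.
      unfold plus, mult; simpl. ring. }
    destruct (mvt_in L G _ x0 x HG Hx0 Hx) as [c [Hc [_ Eq]]].
    assert (Hn : (E' c - C * E c) <= 0).
    { specialize (Hb2 c Hc). unfold Rabs in Hb2; destruct (Rcase_abs _); lra. }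
    pose proof (exp_pos (- C * c)). pose proof (exp_pos (- C * x)).
    assert (G x <= 0).
    { assert (G x - G x0 <= 0).
      { rewrite Eq. apply Rmult_le_0_r. nra. lra. }
      unfold G at 2 in H1. rewrite E0 in H1. lra. }
    unfold G in H1. nra.
  - set (G := fun y => E y * exp (C * y)).
    assert (HG : forall y, 0 < y < L -> is_derive G y ((E' y + C * E y) * exp (C * y))).
    { intros y Hy. unfold G. eapply is_derive_eq.
      apply (is_derive_mult E (fun y => exp (C * y))). apply HE; auto.
      auto_derive; auto. intros; apply Rmult_comm.
      unfold plus, mult; simpl. ring. }
    destruct (mvt_in L G _ x x0 HG Hx Hx0) as [c [Hc [_ Eq]]].
    assert (Hn : 0 <= (E' c + C * E c)).
    { specialize (Hb2 c Hc). unfold Rabs in Hb2; destruct (Rcase_abs _); lra. }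
    pose proof (exp_pos (C * c)). pose proof (exp_pos (C * x)).
    assert (G x <= 0).
    { assert (0 <= G x0 - G x).
      { rewrite Eq. apply Rmult_le_pos. nra. lra. }
      unfold G at 1 in H1. rewrite E0 in H1. lra. }
    unfold G in H1. nra.
Qed.



Lemma choice_gen {A B : Type} (P : A -> B -> Prop) :
  (forall n, exists x, P n x) -> exists f : A -> B, forall n, P n (f n).
Proof.
  intros H. exists (fun n => proj1_sig (constructive_indefinite_description _ (H n))).
  intros n. exact (proj2_sig (constructive_indefinite_description _ (H n))).
Qed.

Lemma lim_inv_S : is_lim_seq (fun j => / (INR j + 1)) 0.
Proof.
  assert (H : is_lim_seq (fun j => INR j + 1) p_infty).
  { eapply is_lim_seq_plus. apply is_lim_seq_INR. apply is_lim_seq_const. simpl. reflexivity. }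
  pose proof (is_lim_seq_inv _ _ H) as H2. simpl in H2. apply H2. discriminate.
Qed.

Lemma extract (u : nat -> R) (B : R) : (forall n, Rabs (u n) <= B) ->
  exists psi : nat -> nat, (forall j, (j <= psi j)%nat) /\ exists l : R, is_lim_seq (fun j => u (psi j)) l.
Proof.
  intros HB. destruct (ex_LimSup_seq u) as [l Hl]. destruct l as [l| |]; simpl in Hl.
  - assert (Hex : forall j, exists n, (j <= n)%nat /\ Rabs (u n - l) <= / (INR j + 1)).
    { intros j. assert (He : 0 < / (INR j + 1)).
      { apply Rinv_0_lt_compat. pose proof (pos_INR j). lra. }
      destruct (Hl (mkposreal _ He)) as [H1 [N H2]]. simpl in *.
      destruct (H1 (max j N)) as [n [Hn Hn2]]. exists n. split. lia.
      specialize (H2 n ltac:(lia)). unfold Rabs; destruct (Rcase_abs _); lra. }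
    destruct (choice_gen _ Hex) as [psi Hpsi].
    exists psi. split. intros j; apply Hpsi. exists l.
    apply (is_lim_seq_le_le (fun j => l - / (INR j + 1)) _ (fun j => l + / (INR j + 1))).
    + intros j. destruct (Hpsi j) as [_ H]. unfold Rabs in H; destruct (Rcase_abs _); lra.
    + replace (Finite l) with (Rbar_minus l 0) by (simpl; f_equal; ring).
      apply is_lim_seq_minus'. apply is_lim_seq_const. apply lim_inv_S.
    + replace (Finite l) with (Rbar_plus l 0) by (simpl; f_equal; ring).
      apply is_lim_seq_plus'. apply is_lim_seq_const. apply lim_inv_S.
  - destruct (Hl B O) as [n [_ Hn]]. specialize (HB n). unfold Rabs in HB; destruct (Rcase_abs _); lra.
  - destruct (Hl (- B)) as [N HN]. specialize (HN N (le_n _)). specialize (HB N).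
    unfold Rabs in HB; destruct (Rcase_abs _); lra.
Qed.





Fixpoint tau (E : (nat -> R) -> nat -> nat) (U : nat -> nat -> R) (k : nat) : nat -> nat :=
  match k with
  | O => E (U O)
  | S k' => fun j => tau E U k' (E (fun n => U (S k') (tau E U k' n)) j)
  end.

Lemma diagonal (U : nat -> nat -> R) (B : nat -> R) : (forall k n, Rabs (U k n) <= B k) ->
  exists d : nat -> nat, (forall n, (n <= d n)%nat) /\ forall k, exists l : R, is_lim_seq (fun n => U k (d n)) l.
Proof.
  intros HB.
  assert (Hex : forall u : nat -> R, exists psi : nat -> nat, (forall j, (j <= psi j)%nat) /\
     ((exists B, forall n, Rabs (u n) <= B) -> exists l : R, is_lim_seq (fun j => u (psi j)) l)).
  { intros u. destruct (classic (exists B, forall n, Rabs (u n) <= B)) as [[B0 HB0]|Hn].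
    - destruct (extract u B0 HB0) as [psi [H1 H2]]. exists psi. split; auto.
    - exists (fun j => j). split; auto. intros H; contradiction. }
  destruct (choice_gen _ Hex) as [E HE].
  assert (P1 : forall k j, (j <= tau E U k j)%nat).
  { induction k; intros j; simpl. apply HE.
    eapply Nat.le_trans; [|apply IHk]. apply HE. }
  assert (P2 : forall k, exists l : R, is_lim_seq (fun j => U k (tau E U k j)) l).
  { intros [|k]; simpl.
    - apply HE. exists (B O). apply HB.
    - apply (proj2 (HE (fun n => U (S k) (tau E U k n)))). exists (B (S k)). intros; apply HB. }
  assert (P3 : forall k m, (k <= m)%nat -> forall j, exists i, (j <= i)%nat /\ tau E U m j = tau E U k i).
  { intros k m Hkm. induction Hkm; intros j.
    - exists j. auto.
    - simpl. destruct (IHHkm (E (fun n => U (S m) (tau E U m n)) j)) as [i [Hi Hi2]].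
      exists i. split; auto. eapply Nat.le_trans; [|exact Hi]. apply HE. }
  exists (fun n => tau E U n n). split. intros; apply P1.
  intros k. destruct (P2 k) as [l Hl]. exists l.
  apply is_lim_seq_Reals. apply is_lim_seq_Reals in Hl.
  intros eps Heps. destruct (Hl eps Heps) as [N HN].
  exists (max k N). intros n Hn.
  destruct (P3 k n ltac:(lia) n) as [i [Hi Hi2]]. rewrite Hi2. apply HN. lia.
Qed.



Definition qpt (L : R) (k : nat) : R :=
  L * (INR (fst (Cantor.of_nat k)) + 1) / (INR (fst (Cantor.of_nat k)) + INR (snd (Cantor.of_nat k)) + 2).

Lemma qpt_in (L : R) k : 0 < L -> 0 < qpt L k < L.
Proof.
  intros HL. unfold qpt. set (i := INR _). set (j := INR _).
  assert (0 <= i) by apply pos_INR. assert (0 <= j) by apply pos_INR.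
  split. apply Rdiv_lt_0_compat; nra.
  apply Rlt_div_l; nra.
Qed.

Lemma qpt_dense (L x eps : R) : 0 < L -> 0 < x < L -> 0 < eps -> exists k, Rabs (x - qpt L k) < eps.
Proof.
  intros HL Hx He. set (t := x / L).
  assert (Ht : 0 < t < 1) by (unfold t; split; [apply Rdiv_lt_0_compat; lra| apply Rlt_div_l; lra]).
  assert (Hpos : 0 <= L / eps + 2 / (1 - t)).
  { assert (0 < L/eps) by (apply Rdiv_lt_0_compat; lra). assert (0 < 2/(1-t)) by (apply Rdiv_lt_0_compat; lra). lra. }
  destruct (nfloor_ex _ Hpos) as [b0 Hb0].
  set (b := S b0). assert (Hb : L / eps + 2 / (1 - t) < INR b) by (unfold b; rewrite S_INR; lra).
  assert (Hb1 : 0 < INR b) by (assert (0 < L/eps) by (apply Rdiv_lt_0_compat; lra); assert (0 < 2/(1-t)) by (apply Rdiv_lt_0_compat; lra); lra).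
  assert (Htb : 0 < t * INR b) by nra.
  destruct (nfloor1_ex _ Htb) as [a Ha].
  assert (Hb2 : 2 < (1 - t) * INR b).
  { assert (2 / (1 - t) < INR b) by (assert (0 < L/eps) by (apply Rdiv_lt_0_compat; lra); lra).
    apply Rlt_div_l in H; lra. }
  assert (Hb3 : L < eps * INR b).
  { assert (L / eps < INR b) by (assert (0 < 2/(1-t)) by (apply Rdiv_lt_0_compat; lra); lra).
    apply Rlt_div_l in H; lra. }
  assert (Hab : (a + 2 <= b)%nat).
  { apply INR_le. rewrite plus_INR. replace (INR 2) with 2 by (simpl; ring). nra. }
  exists (Cantor.to_nat (a, (b - a - 2)%nat)). unfold qpt. rewrite Cantor.cancel_of_to. cbn [fst snd].
  assert (E : INR a + INR (b - a - 2) + 2 = INR b).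
  { rewrite !minus_INR by lia. simpl. lra. }
  rewrite E.
  assert (x = L * t) by (unfold t; field; lra). rewrite H.
  replace (L * t - L * (INR a + 1) / INR b) with (L * (t * INR b - (INR a + 1)) / INR b) by (field; lra).
  rewrite Rabs_div by lra. rewrite (Rabs_pos_eq (INR b)) by lra.
  apply Rlt_div_l; [lra|]. rewrite Rabs_mult, Rabs_pos_eq by lra.
  assert (Rabs (t * INR b - (INR a + 1)) <= 1) by (unfold Rabs; destruct (Rcase_abs _); lra).
  nra.
Qed.

Lemma equi_conv (L M : R) (G : nat -> R -> R) : 0 < L -> 0 <= M ->
  (forall n x y, 0 < x < L -> 0 < y < L -> Rabs (G n x - G n y) <= M * Rabs (x - y)) ->
  (forall k, exists l : R, is_lim_seq (fun n => G n (qpt L k)) l) ->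
  forall x, 0 < x < L -> exists l : R, is_lim_seq (fun n => G n x) l.
Proof.
  intros HL HM Hl Hq x Hx.
  assert (Hc : Cauchy_crit (fun n => G n x)).
  { intros eps He.
    assert (Hd : 0 < eps / (4 * (M + 1))) by (apply Rdiv_lt_0_compat; lra).
    destruct (qpt_dense L x _ HL Hx Hd) as [k Hk].
    destruct (Hq k) as [l Hlk]. apply is_lim_seq_Reals in Hlk.
    destruct (Hlk (eps / 4)) as [N HN]. lra.
    exists N. intros n m Hn Hm.
    pose proof (HN n Hn). pose proof (HN m Hm).
    pose proof (qpt_in L k HL).
    pose proof (Hl n x (qpt L k) Hx H1). pose proof (Hl m x (qpt L k) Hx H1).
    assert (M * Rabs (x - qpt L k) <= eps / 4).
    { apply Rlt_div_r in Hk; [|lra].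
      assert (M * Rabs (x - qpt L k) <= (M + 1) * Rabs (x - qpt L k)) by (pose proof (Rabs_pos (x - qpt L k)); nra).
      lra. }
    unfold R_dist in *. clear Hlk Hq Hl HN.
    set (A := M * Rabs (x - qpt L k)) in *. clearbody A.
    unfold Rabs in *. repeat destruct (Rcase_abs _); lra. }
  destruct (Rcomplete.R_complete _ Hc) as [l Hl2]. exists l. apply is_lim_seq_Reals. exact Hl2.
Qed.



Record bdata := BD { bP : R -> R; bS : R -> R; bP1 : R -> R; bP2 : R -> R; bS1 : R -> R; bS2 : R -> R }.

Definition bgood (L a b : R) (d : bdata) : Prop :=
  cont_on_closed L (bP d) /\ cont_on_closed L (bS d) /\
  twice_diff_on_open L (bP d) (bP1 d) (bP2 d) /\
  twice_diff_on_open L (bS d) (bS1 d) (bS2 d) /\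
  (forall x, 0 < x < L ->
     - bP2 d x = bP d x * (1 - bP d x - a * bS d x) /\
     - bS2 d x = bS d x * (1 - b * bP d x - bS d x)) /\
  bP d 0 = 0 /\ bP d L = 0 /\ bS d 0 = 1 /\ bS d L = 1 /\
  (forall x, 0 < x < L -> 0 < bP d x < 1 /\ 0 < bS d x < 1).

Lemma bgood_iff L a b : barrier_exists L a b <-> exists d, bgood L a b d.
Proof.
  split.
  - intros [phi [psi [H1 [H2 [p1 [p2 [s1 [s2 [H3 [H4 H5]]]]]]]]]].
    exists (BD phi psi p1 p2 s1 s2). unfold bgood; simpl. tauto.
  - intros [[phi psi p1 p2 s1 s2] H]. unfold bgood in H; simpl in H.
    exists phi, psi. destruct H as [H1 [H2 [H3 [H4 H5]]]].
    split; [exact H1|split; [exact H2|]]. exists p1, p2, s1, s2. tauto.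
Qed.

Lemma per_n (L A B al be : R) (d : bdata) : 0 < L -> 0 <= al <= A -> 0 <= be <= B ->
  bgood L al be d ->
  let K := 1 + A + B in let M := 2 / L + K * L in let K2 := (3 + 2 * A + 2 * B) * M in
  0 <= K /\ 0 <= M /\ 0 <= K2 /\
  (forall x y, 0 <= x <= L -> 0 <= y <= L -> Rabs (bP d x - bP d y) <= M * Rabs (x - y)) /\
  (forall x y, 0 <= x <= L -> 0 <= y <= L -> Rabs (bS d x - bS d y) <= M * Rabs (x - y)) /\
  (forall x y, 0 < x < L -> 0 < y < L -> Rabs (bP1 d x - bP1 d y) <= K * Rabs (x - y)) /\
  (forall x y, 0 < x < L -> 0 < y < L -> Rabs (bS1 d x - bS1 d y) <= K * Rabs (x - y)) /\
  (forall x, 0 < x < L -> Rabs (bP1 d x) <= M /\ Rabs (bS1 d x) <= M) /\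
  (forall x y, 0 < x < L -> 0 < y < L ->
     Rabs (bP d y - bP d x - bP1 d x * (y - x)) <= K * Rabs (y - x) * Rabs (y - x)) /\
  (forall x y, 0 < x < L -> 0 < y < L ->
     Rabs (bS d y - bS d x - bS1 d x * (y - x)) <= K * Rabs (y - x) * Rabs (y - x)) /\
  (forall x y, 0 < x < L -> 0 < y < L ->
     Rabs (bP1 d y - bP1 d x - bP2 d x * (y - x)) <= K2 * Rabs (y - x) * Rabs (y - x)) /\
  (forall x y, 0 < x < L -> 0 < y < L ->
     Rabs (bS1 d y - bS1 d x - bS2 d x * (y - x)) <= K2 * Rabs (y - x) * Rabs (y - x)) /\
  (exists c, 0 < c < L /\ al * bS d c < 1).
Proof.
  intros HL Hal Hbe [Hc1 [Hc2 [Hd1 [Hd2 [Heq [B1 [B2 [B3 [B4 Hb]]]]]]]]] K M K2.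
  assert (HK : 0 <= K) by (unfold K; lra).
  assert (HM : 0 <= M) by (unfold M; assert (0 < 2 / L) by (apply Rdiv_lt_0_compat; lra); nra).
  assert (HK2 : 0 <= K2) by (unfold K2; nra).
  assert (DP : forall x, 0 < x < L -> is_derive (bP d) x (bP1 d x)) by (intros; apply Hd1; auto).
  assert (DP1 : forall x, 0 < x < L -> is_derive (bP1 d) x (bP2 d x)) by (intros; apply Hd1; auto).
  assert (DS : forall x, 0 < x < L -> is_derive (bS d) x (bS1 d x)) by (intros; apply Hd2; auto).
  assert (DS1 : forall x, 0 < x < L -> is_derive (bS1 d) x (bS2 d x)) by (intros; apply Hd2; auto).
  assert (BP2 : forall x, 0 < x < L -> Rabs (bP2 d x) <= K).
  { intros x Hx. destruct (Heq x Hx) as [E _]. destruct (Hb x Hx) as [[? ?] [? ?]].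
    replace (bP2 d x) with (- (bP d x * (1 - bP d x - al * bS d x))) by lra.
    rewrite Rabs_Ropp, Rabs_mult. rewrite (Rabs_pos_eq (bP d x)) by lra.
    assert (Rabs (1 - bP d x - al * bS d x) <= 1 + A) by (unfold Rabs; destruct (Rcase_abs _); nra).
    unfold K. nra. }
  assert (BS2 : forall x, 0 < x < L -> Rabs (bS2 d x) <= K).
  { intros x Hx. destruct (Heq x Hx) as [_ E]. destruct (Hb x Hx) as [[? ?] [? ?]].
    replace (bS2 d x) with (- (bS d x * (1 - be * bP d x - bS d x))) by lra.
    rewrite Rabs_Ropp, Rabs_mult. rewrite (Rabs_pos_eq (bS d x)) by lra.
    assert (Rabs (1 - be * bP d x - bS d x) <= 1 + B) by (unfold Rabs; destruct (Rcase_abs _); nra).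
    unfold K. nra. }
  assert (LP1 := lip_of_deriv L K _ _ DP1 BP2).
  assert (LS1 := lip_of_deriv L K _ _ DS1 BS2).
  assert (DB : forall (f f' : R -> R), (forall x, 0 < x < L -> is_derive f x (f' x)) ->
             (forall x, 0 < x < L -> 0 < f x < 1) ->
             (forall x y, 0 < x < L -> 0 < y < L -> Rabs (f' x - f' y) <= K * Rabs (x - y)) ->
             forall x, 0 < x < L -> Rabs (f' x) <= M).
  { intros f f' Df Bf Lf x Hx.
    assert (H1 : 0 < L/4 < L) by lra. assert (H2 : 0 < 3*L/4 < L) by lra.
    destruct (mvt_in L f f' (L/4) (3*L/4) Df H1 H2) as [c [Hc [_ Ec]]].
    assert (Rabs (f' c) <= 2 / L).
    { pose proof (Bf _ H1); pose proof (Bf _ H2).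
      assert (Rabs (f' c) * (L/2) < 1).
      { replace (Rabs (f' c) * (L/2)) with (Rabs (f' c * (3 * L / 4 - L / 4))).
        rewrite <- Ec. unfold Rabs; destruct (Rcase_abs _); lra.
        rewrite Rabs_mult, (Rabs_pos_eq (3 * L / 4 - L / 4)) by lra. f_equal; field. }
      apply Rle_div_r. lra. lra. }
    pose proof (Lf x c Hx Hc).
    assert (Rabs (x - c) <= L) by (unfold Rabs; destruct (Rcase_abs _); lra).
    assert (Rabs (f' x) <= Rabs (f' c) + Rabs (f' x - f' c)) by (unfold Rabs; repeat destruct (Rcase_abs _); lra).
    unfold M. nra. }
  assert (BP1 : forall x, 0 < x < L -> Rabs (bP1 d x) <= M).
  { apply (DB _ _ DP); auto. intros; apply Hb; auto. }
  assert (BS1 : forall x, 0 < x < L -> Rabs (bS1 d x) <= M).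
  { apply (DB _ _ DS); auto. intros; apply Hb; auto. }
  assert (LP : forall x y, 0 <= x <= L -> 0 <= y <= L -> Rabs (bP d x - bP d y) <= M * Rabs (x - y)).
  { apply lip_ext; auto. apply (lip_of_deriv L M _ _ DP BP1). }
  assert (LS : forall x y, 0 <= x <= L -> 0 <= y <= L -> Rabs (bS d x - bS d y) <= M * Rabs (x - y)).
  { apply lip_ext; auto. apply (lip_of_deriv L M _ _ DS BS1). }
  assert (LP2 : forall x y, 0 < x < L -> 0 < y < L -> Rabs (bP2 d x - bP2 d y) <= K2 * Rabs (x - y)).
  { intros x y Hx Hy. destruct (Heq x Hx) as [E1 _]. destruct (Heq y Hy) as [E2 _].
    destruct (Hb x Hx) as [[? ?] [? ?]]. destruct (Hb y Hy) as [[? ?] [? ?]].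
    pose proof (LP x y ltac:(lra) ltac:(lra)). pose proof (LS x y ltac:(lra) ltac:(lra)).
    replace (bP2 d x - bP2 d y) with (- (bP d x - bP d y) + (bP d x - bP d y) * (bP d x + bP d y)
       + al * ((bP d x - bP d y) * bS d x + bP d y * (bS d x - bS d y))) by nra.
    set (u := bP d x - bP d y) in *. set (v := bS d x - bS d y) in *.
    assert (Rabs (- u + u * (bP d x + bP d y) + al * (u * bS d x + bP d y * v)) <=
            Rabs u * (3 + A) + A * Rabs v).
    { eapply Rle_trans. apply Rabs_triang. rewrite Rabs_mult.
      eapply Rle_trans. apply Rplus_le_compat_r. apply Rabs_triang.
      rewrite Rabs_Ropp, Rabs_mult, (Rabs_pos_eq al) by lra.
      assert (Rabs (u * bS d x + bP d y * v) <= Rabs u + Rabs v).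
      { eapply Rle_trans. apply Rabs_triang. rewrite !Rabs_mult.
        rewrite (Rabs_pos_eq (bS d x)) by lra. rewrite (Rabs_pos_eq (bP d y)) by lra.
        pose proof (Rabs_pos u); pose proof (Rabs_pos v). nra. }
      rewrite (Rabs_pos_eq (bP d x + bP d y)) by lra.
      pose proof (Rabs_pos u); pose proof (Rabs_pos v).
      pose proof (Rabs_pos (u * bS d x + bP d y * v)). nra. }
    pose proof (Rabs_pos (x - y)). pose proof (Rabs_pos u); pose proof (Rabs_pos v).
    unfold K2. nra. }
  assert (LS2 : forall x y, 0 < x < L -> 0 < y < L -> Rabs (bS2 d x - bS2 d y) <= K2 * Rabs (x - y)).
  { intros x y Hx Hy. destruct (Heq x Hx) as [_ E1]. destruct (Heq y Hy) as [_ E2].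
    destruct (Hb x Hx) as [[? ?] [? ?]]. destruct (Hb y Hy) as [[? ?] [? ?]].
    pose proof (LP x y ltac:(lra) ltac:(lra)). pose proof (LS x y ltac:(lra) ltac:(lra)).
    replace (bS2 d x - bS2 d y) with (- (bS d x - bS d y) + (bS d x - bS d y) * (bS d x + bS d y)
       + be * ((bS d x - bS d y) * bP d x + bS d y * (bP d x - bP d y))) by nra.
    set (u := bS d x - bS d y) in *. set (v := bP d x - bP d y) in *.
    assert (Rabs (- u + u * (bS d x + bS d y) + be * (u * bP d x + bS d y * v)) <=
            Rabs u * (3 + B) + B * Rabs v).
    { eapply Rle_trans. apply Rabs_triang. rewrite Rabs_mult.
      eapply Rle_trans. apply Rplus_le_compat_r. apply Rabs_triang.
      rewrite Rabs_Ropp, Rabs_mult, (Rabs_pos_eq be) by lra.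
      assert (Rabs (u * bP d x + bS d y * v) <= Rabs u + Rabs v).
      { eapply Rle_trans. apply Rabs_triang. rewrite !Rabs_mult.
        rewrite (Rabs_pos_eq (bP d x)) by lra. rewrite (Rabs_pos_eq (bS d y)) by lra.
        pose proof (Rabs_pos u); pose proof (Rabs_pos v). nra. }
      rewrite (Rabs_pos_eq (bS d x + bS d y)) by lra.
      pose proof (Rabs_pos u); pose proof (Rabs_pos v).
      pose proof (Rabs_pos (u * bP d x + bS d y * v)). nra. }
    pose proof (Rabs_pos (x - y)). pose proof (Rabs_pos u); pose proof (Rabs_pos v).
    unfold K2. nra. }
  split; [exact HK|split; [exact HM|split; [exact HK2|]]].
  split; [exact LP|split; [exact LS|split; [exact LP1|split; [exact LS1|]]]].
  split; [intros; split; auto|].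
  split; [apply (taylor1 L K _ _ HK DP LP1)|].
  split; [apply (taylor1 L K _ _ HK DS LS1)|].
  split; [apply (taylor1 L K2 _ _ HK2 DP1 LP2)|].
  split; [apply (taylor1 L K2 _ _ HK2 DS1 LS2)|].
  assert (Hm : 0 < L/2 < L) by lra.
  destruct (bump_down L (bP d) (bP1 d) (bP2 d) (L/2) HL Hc1 Hd1 Hm) as [c [Hc Hn]].
  rewrite B1; apply Hb; auto. rewrite B2; apply Hb; auto.
  exists c. split; auto. destruct (Heq c Hc) as [E _]. destruct (Hb c Hc) as [[? ?] [? ?]].
  assert (0 < bP d c * (1 - bP d c - al * bS d c)) by lra.
  assert (0 < 1 - bP d c - al * bS d c) by (apply (pos_of_prod _ (bP d c)); lra || nra).
  lra.
Qed.

Definition lim_fun (G : nat -> R -> R) (x : R) : R := real (Lim_seq (fun n => G n x)).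

Lemma lim_fun_eq (G : nat -> R -> R) x (l : R) : is_lim_seq (fun n => G n x) l -> lim_fun G x = l.
Proof. intros H. unfold lim_fun. rewrite (is_lim_seq_unique _ _ H). reflexivity. Qed.

Lemma lim_abs_le (z : nat -> R) (l c : R) : is_lim_seq z l -> (forall n, Rabs (z n) <= c) -> Rabs l <= c.
Proof.
  intros Hz Hb. apply is_lim_seq_abs in Hz.
  pose proof (is_lim_seq_le _ _ _ _ Hb Hz (is_lim_seq_const c)). simpl in H. exact H.
Qed.

Lemma lim_bounds (u : nat -> R) (l lo hi : R) : is_lim_seq u l -> (forall n, lo <= u n <= hi) -> lo <= l <= hi.
Proof.
  intros Hu Hb. split.
  - pose proof (is_lim_seq_le _ _ _ _ (fun n => proj1 (Hb n)) (is_lim_seq_const lo) Hu). exact H.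
  - pose proof (is_lim_seq_le _ _ _ _ (fun n => proj2 (Hb n)) Hu (is_lim_seq_const hi)). exact H.
Qed.

Lemma lim_lip (u v : nat -> R) (lu lv c : R) : is_lim_seq u lu -> is_lim_seq v lv ->
  (forall n, Rabs (u n - v n) <= c) -> Rabs (lu - lv) <= c.
Proof.
  intros Hu Hv Hb. apply (lim_abs_le (fun n => u n - v n)); auto.
  apply (is_lim_seq_minus' _ _ _ _ Hu Hv).
Qed.

Lemma lim_tay (u v w : nat -> R) (lu lv lw h c : R) : is_lim_seq u lu -> is_lim_seq v lv -> is_lim_seq w lw ->
  (forall n, Rabs (u n - v n - w n * h) <= c) -> Rabs (lu - lv - lw * h) <= c.
Proof.
  intros Hu Hv Hw Hb. apply (lim_abs_le (fun n => u n - v n - w n * h)); auto.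
  apply is_lim_seq_minus'. apply (is_lim_seq_minus' _ _ _ _ Hu Hv).
  apply is_lim_seq_mult'. exact Hw. apply is_lim_seq_const.
Qed.

Lemma lim_expr (u v w : nat -> R) (p s al : R) : is_lim_seq u p -> is_lim_seq v s -> is_lim_seq w al ->
  is_lim_seq (fun n => - (u n * (1 - w n * v n - u n))) (- (p * (1 - al * s - p))).
Proof.
  intros Hu Hv Hw. change (Finite (- (p * (1 - al * s - p)))) with (Rbar_opp (p * (1 - al * s - p))).
  apply -> is_lim_seq_opp. apply is_lim_seq_mult'; auto.
  apply is_lim_seq_minus'; auto. apply is_lim_seq_minus'. apply is_lim_seq_const.
  apply is_lim_seq_mult'; auto.
Qed.

Lemma lim_comp_pt (u : nat -> R) (w : nat -> R) (G : nat -> R -> R) (c l M : R) :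
  is_lim_seq w c -> is_lim_seq (fun n => G n c) l ->
  (forall n, Rabs (G n (w n) - G n c) <= M * Rabs (w n - c)) -> is_lim_seq (fun n => G n (w n)) l.
Proof.
  intros Hw HG Hb.
  assert (Hz : is_lim_seq (fun n => M * Rabs (w n - c)) 0).
  { replace (Finite 0) with (Rbar_mult M (Rabs (c - c))) by (simpl; f_equal; rewrite Rminus_eq_0, Rabs_R0; ring).
    apply is_lim_seq_scal_l. change (Finite (Rabs (c - c))) with (Rbar_abs (c - c)).
    apply is_lim_seq_abs. apply is_lim_seq_minus'; auto. apply is_lim_seq_const. }
  apply (is_lim_seq_le_le (fun n => G n c - M * Rabs (w n - c)) _ (fun n => G n c + M * Rabs (w n - c))).
  - intros n. specialize (Hb n). unfold Rabs at 1 in Hb. destruct (Rcase_abs _); lra.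
  - replace (Finite l) with (Rbar_minus l 0) by (simpl; f_equal; ring). apply is_lim_seq_minus'; auto.
  - replace (Finite l) with (Rbar_plus l 0) by (simpl; f_equal; ring). apply is_lim_seq_plus'; auto.
Qed.

Lemma filterlim_ge (d : nat -> nat) : (forall n, (n <= d n)%nat) -> filterlim d eventually eventually.
Proof.
  intros Hd P [N HN]. exists N. intros n Hn. apply HN. specialize (Hd n). lia.
Qed.

Lemma core (L : R) (an bn : nat -> R) (a b A B : R) : 0 < L ->
  (forall n, 0 <= an n <= A /\ 0 <= bn n <= B) ->
  (forall n, exists d, bgood L (an n) (bn n) d) ->
  is_lim_seq an a -> is_lim_seq bn b -> 1 < a -> 0 < b ->
  exists d, bgood L a b d.
Proof.
  intros HL Hab HD Ha Hb Ha1 Hb0.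
  destruct (choice_gen _ HD) as [D HDg].
  assert (PN := fun n => per_n L A B (an n) (bn n) (D n) HL (proj1 (Hab n)) (proj2 (Hab n)) (HDg n)).
  cbv zeta in PN.
  set (K := 1 + A + B) in PN. set (M := 2 / L + K * L) in PN. set (K2 := (3 + 2 * A + 2 * B) * M) in PN.
  assert (HK : 0 <= K) by apply (PN O). assert (HM : 0 <= M) by apply (PN O).
  assert (HK2 : 0 <= K2) by apply (PN O).
  assert (Hc : forall n, exists c, 0 < c < L /\ an n * bS (D n) c < 1) by apply PN.
  destruct (choice_gen _ Hc) as [C HC].
  set (U := fun k n => let p := Cantor.of_nat k in let q := qpt L (snd p) in
     match fst p with
     | O => bP (D n) q | 1%nat => bS (D n) q | 2%nat => bP1 (D n) q | 3%nat => bS1 (D n) q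
     | _ => C n end).
  destruct (diagonal U (fun _ => 1 + M + L)) as [d [Hd Hconv]].
  { intros k n. unfold U. pose proof (qpt_in L (snd (Cantor.of_nat k)) HL) as Hq.
    set (q := qpt L (snd (Cantor.of_nat k))) in *.
    destruct (proj2 (HDg n)) as [_ [_ [_ [_ [_ [_ [_ [_ Hbd]]]]]]]].
    destruct (Hbd q Hq) as [[? ?] [? ?]].
    destruct (PN n) as [_ [_ [_ [_ [_ [_ [_ [Hb1 _]]]]]]]].
    destruct (Hb1 q Hq).
    destruct (HC n).
    destruct (fst (Cantor.of_nat k)) as [|[|[|[|]]]]; unfold Rabs in *; repeat destruct (Rcase_abs _); lra. }
  assert (QU : forall f k, exists l : R, is_lim_seq (fun n => U (Cantor.to_nat (f, k)) (d n)) l) by (intros; apply Hconv).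
  assert (Q0 : forall k, exists l : R, is_lim_seq (fun n => bP (D (d n)) (qpt L k)) l).
  { intros k. destruct (QU 0%nat k) as [l Hl]. exists l. eapply is_lim_seq_ext; [|exact Hl].
    intros n. unfold U. cbv zeta. rewrite Cantor.cancel_of_to. reflexivity. }
  assert (Q1 : forall k, exists l : R, is_lim_seq (fun n => bS (D (d n)) (qpt L k)) l).
  { intros k. destruct (QU 1%nat k) as [l Hl]. exists l. eapply is_lim_seq_ext; [|exact Hl].
    intros n. unfold U. cbv zeta. rewrite Cantor.cancel_of_to. reflexivity. }
  assert (Q2 : forall k, exists l : R, is_lim_seq (fun n => bP1 (D (d n)) (qpt L k)) l).
  { intros k. destruct (QU 2%nat k) as [l Hl]. exists l. eapply is_lim_seq_ext; [|exact Hl].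
    intros n. unfold U. cbv zeta. rewrite Cantor.cancel_of_to. reflexivity. }
  assert (Q3 : forall k, exists l : R, is_lim_seq (fun n => bS1 (D (d n)) (qpt L k)) l).
  { intros k. destruct (QU 3%nat k) as [l Hl]. exists l. eapply is_lim_seq_ext; [|exact Hl].
    intros n. unfold U. cbv zeta. rewrite Cantor.cancel_of_to. reflexivity. }
  destruct (QU 4%nat O) as [cs Hcs].
  assert (HCs : is_lim_seq (fun n => C (d n)) cs).
  { eapply is_lim_seq_ext; [|exact Hcs]. intros n. unfold U. cbv zeta. rewrite Cantor.cancel_of_to. reflexivity. }
  clearbody U. clear Hconv QU Hcs.
  assert (IP : forall x, 0 < x < L -> exists l : R, is_lim_seq (fun n => bP (D (d n)) x) l).
  { apply (equi_conv L M (fun n => bP (D (d n))) HL HM); auto.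
    intros n x y Hx Hy. apply (PN (d n)); lra. }
  assert (IS : forall x, 0 < x < L -> exists l : R, is_lim_seq (fun n => bS (D (d n)) x) l).
  { apply (equi_conv L M (fun n => bS (D (d n))) HL HM); auto.
    intros n x y Hx Hy. apply (PN (d n)); lra. }
  assert (IP1 : forall x, 0 < x < L -> exists l : R, is_lim_seq (fun n => bP1 (D (d n)) x) l).
  { apply (equi_conv L K (fun n => bP1 (D (d n))) HL HK); auto.
    intros n x y Hx Hy. apply (PN (d n)); lra. }
  assert (IS1 : forall x, 0 < x < L -> exists l : R, is_lim_seq (fun n => bS1 (D (d n)) x) l).
  { apply (equi_conv L K (fun n => bS1 (D (d n))) HL HK); auto.
    intros n x y Hx Hy. apply (PN (d n)); lra. }
  set (Phi := lim_fun (fun n => bP (D (d n)))).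
  set (Psi := lim_fun (fun n => bS (D (d n)))).
  set (Phi1 := lim_fun (fun n => bP1 (D (d n)))).
  set (Psi1 := lim_fun (fun n => bS1 (D (d n)))).
  set (Phi2 := fun x => - (Phi x * (1 - a * Psi x - Phi x))).
  set (Psi2 := fun x => - (Psi x * (1 - b * Phi x - Psi x))).
  assert (Gd : forall n, bgood L (an (d n)) (bn (d n)) (D (d n))) by (intros; apply HDg).
  assert (CP : forall x, 0 <= x <= L -> is_lim_seq (fun n => bP (D (d n)) x) (Phi x)).
  { intros x Hx. destruct (Req_dec x 0) as [E|E]; [|destruct (Req_dec x L) as [E'|E']].
    - subst x. assert (H0 : is_lim_seq (fun n => bP (D (d n)) 0) 0).
      { eapply is_lim_seq_ext; [|apply is_lim_seq_const]. intros n; simpl. symmetry. apply (Gd n). }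
      unfold Phi. rewrite (lim_fun_eq _ _ _ H0). exact H0.
    - subst x. assert (H0 : is_lim_seq (fun n => bP (D (d n)) L) 0).
      { eapply is_lim_seq_ext; [|apply is_lim_seq_const]. intros n; simpl. symmetry. apply (Gd n). }
      unfold Phi. rewrite (lim_fun_eq _ _ _ H0). exact H0.
    - destruct (IP x ltac:(lra)) as [l Hl]. unfold Phi. rewrite (lim_fun_eq _ _ _ Hl). exact Hl. }
  assert (CS : forall x, 0 <= x <= L -> is_lim_seq (fun n => bS (D (d n)) x) (Psi x)).
  { intros x Hx. destruct (Req_dec x 0) as [E|E]; [|destruct (Req_dec x L) as [E'|E']].
    - subst x. assert (H0 : is_lim_seq (fun n => bS (D (d n)) 0) 1).
      { eapply is_lim_seq_ext; [|apply is_lim_seq_const]. intros n; simpl. symmetry. apply (Gd n). }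
      unfold Psi. rewrite (lim_fun_eq _ _ _ H0). exact H0.
    - subst x. assert (H0 : is_lim_seq (fun n => bS (D (d n)) L) 1).
      { eapply is_lim_seq_ext; [|apply is_lim_seq_const]. intros n; simpl. symmetry. apply (Gd n). }
      unfold Psi. rewrite (lim_fun_eq _ _ _ H0). exact H0.
    - destruct (IS x ltac:(lra)) as [l Hl]. unfold Psi. rewrite (lim_fun_eq _ _ _ Hl). exact Hl. }
  assert (CP1 : forall x, 0 < x < L -> is_lim_seq (fun n => bP1 (D (d n)) x) (Phi1 x)).
  { intros x Hx. destruct (IP1 x Hx) as [l Hl]. unfold Phi1. rewrite (lim_fun_eq _ _ _ Hl). exact Hl. }
  assert (CS1 : forall x, 0 < x < L -> is_lim_seq (fun n => bS1 (D (d n)) x) (Psi1 x)).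
  { intros x Hx. destruct (IS1 x Hx) as [l Hl]. unfold Psi1. rewrite (lim_fun_eq _ _ _ Hl). exact Hl. }
  assert (Ca : is_lim_seq (fun n => an (d n)) a) by (apply is_lim_seq_subseq; [apply filterlim_ge; auto|auto]).
  assert (Cb : is_lim_seq (fun n => bn (d n)) b) by (apply is_lim_seq_subseq; [apply filterlim_ge; auto|auto]).
  assert (CP2 : forall x, 0 < x < L -> is_lim_seq (fun n => bP2 (D (d n)) x) (Phi2 x)).
  { intros x Hx. unfold Phi2. eapply is_lim_seq_ext; [|apply (lim_expr _ _ _ _ _ _ (CP x ltac:(lra)) (CS x ltac:(lra)) Ca)].
    intros n. simpl. destruct (Gd n) as [_ [_ [_ [_ [Heq _]]]]]. destruct (Heq x Hx) as [E _]. lra. }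
  assert (CS2 : forall x, 0 < x < L -> is_lim_seq (fun n => bS2 (D (d n)) x) (Psi2 x)).
  { intros x Hx. unfold Psi2. eapply is_lim_seq_ext; [|apply (lim_expr _ _ _ _ _ _ (CS x ltac:(lra)) (CP x ltac:(lra)) Cb)].
    intros n. simpl. destruct (Gd n) as [_ [_ [_ [_ [Heq _]]]]]. destruct (Heq x Hx) as [_ E]. lra. }
  assert (BPh : forall x, 0 < x < L -> 0 <= Phi x <= 1 /\ 0 <= Psi x <= 1).
  { intros x Hx. split.
    - apply (lim_bounds _ _ _ _ (CP x ltac:(lra))). intros n. destruct (Gd n) as [_ [_ [_ [_ [_ [_ [_ [_ [_ Hb']]]]]]]]].
      destruct (Hb' x Hx); lra.
    - apply (lim_bounds _ _ _ _ (CS x ltac:(lra))). intros n. destruct (Gd n) as [_ [_ [_ [_ [_ [_ [_ [_ [_ Hb']]]]]]]]].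
      destruct (Hb' x Hx); lra. }
  assert (LPh : forall x y, 0 <= x <= L -> 0 <= y <= L -> Rabs (Phi x - Phi y) <= M * Rabs (x - y)).
  { intros x y Hx Hy. apply (lim_lip _ _ _ _ _ (CP x Hx) (CP y Hy)). intros n. apply (PN (d n)); auto. }
  assert (LPs : forall x y, 0 <= x <= L -> 0 <= y <= L -> Rabs (Psi x - Psi y) <= M * Rabs (x - y)).
  { intros x y Hx Hy. apply (lim_lip _ _ _ _ _ (CS x Hx) (CS y Hy)). intros n. apply (PN (d n)); auto. }
  assert (DPh : forall x, 0 < x < L -> is_derive Phi x (Phi1 x)).
  { intros x Hx. apply (deriv_of_quad L K); auto. intros y Hy.
    apply (lim_tay _ _ _ _ _ _ _ _ (CP y ltac:(lra)) (CP x ltac:(lra)) (CP1 x Hx)).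
    intros n. apply (PN (d n)); auto. }
  assert (DPs : forall x, 0 < x < L -> is_derive Psi x (Psi1 x)).
  { intros x Hx. apply (deriv_of_quad L K); auto. intros y Hy.
    apply (lim_tay _ _ _ _ _ _ _ _ (CS y ltac:(lra)) (CS x ltac:(lra)) (CS1 x Hx)).
    intros n. apply (PN (d n)); auto. }
  assert (DPh1 : forall x, 0 < x < L -> is_derive Phi1 x (Phi2 x)).
  { intros x Hx. apply (deriv_of_quad L K2); auto. intros y Hy.
    apply (lim_tay _ _ _ _ _ _ _ _ (CP1 y Hy) (CP1 x Hx) (CP2 x Hx)).
    intros n. apply (PN (d n)); auto. }
  assert (DPs1 : forall x, 0 < x < L -> is_derive Psi1 x (Psi2 x)).
  { intros x Hx. apply (deriv_of_quad L K2); auto. intros y Hy.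
    apply (lim_tay _ _ _ _ _ _ _ _ (CS1 y Hy) (CS1 x Hx) (CS2 x Hx)).
    intros n. apply (PN (d n)); auto. }
  assert (ContP : cont_on_closed L Phi) by (apply (lip_cont L M); auto).
  assert (ContS : cont_on_closed L Psi) by (apply (lip_cont L M); auto).
  assert (TP : twice_diff_on_open L Phi Phi1 Phi2) by (intros x Hx; split; auto).
  assert (TS : twice_diff_on_open L Psi Psi1 Psi2) by (intros x Hx; split; auto).
  assert (P0 : Phi 0 = 0).
  { apply lim_fun_eq. eapply is_lim_seq_ext; [|apply is_lim_seq_const]. intros n; simpl. symmetry. apply (Gd n). }
  assert (PL : Phi L = 0).
  { apply lim_fun_eq. eapply is_lim_seq_ext; [|apply is_lim_seq_const]. intros n; simpl. symmetry. apply (Gd n). }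
  assert (S0 : Psi 0 = 1).
  { apply lim_fun_eq. eapply is_lim_seq_ext; [|apply is_lim_seq_const]. intros n; simpl. symmetry. apply (Gd n). }
  assert (SL : Psi L = 1).
  { apply lim_fun_eq. eapply is_lim_seq_ext; [|apply is_lim_seq_const]. intros n; simpl. symmetry. apply (Gd n). }
  assert (NZ : ~ (forall x, 0 < x < L -> Phi x = 0)).
  { intros H0.
    assert (Ps1 : forall x, 0 < x < L -> Psi x = 1).
    { intros x Hx. destruct (Req_dec (Psi x) 1) as [E|E]; auto. exfalso.
      destruct (BPh x Hx) as [_ [? ?]].
      destruct (bump_up L Psi Psi1 Psi2 x HL ContS TS Hx) as [c [Hc0 Hpos]]; [lra|lra|].
      unfold Psi2 in Hpos. rewrite (H0 c Hc0) in Hpos. destruct (BPh c Hc0) as [_ [? ?]]. nra. }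
    assert (Hcs : 0 <= cs <= L).
    { apply (lim_bounds _ _ _ _ HCs). intros n. destruct (HC (d n)); lra. }
    assert (Pcs : Psi cs = 1).
    { destruct (Req_dec cs 0) as [E|E]; [subst; auto|].
      destruct (Req_dec cs L) as [E'|E']; [subst; auto|]. apply Ps1; lra. }
    assert (Hl : is_lim_seq (fun n => bS (D (d n)) (C (d n))) (Psi cs)).
    { apply (lim_comp_pt (fun n => C (d n)) (fun n => C (d n)) (fun n => bS (D (d n))) cs _ M HCs (CS cs Hcs)).
      intros n. apply (PN (d n)); [destruct (HC (d n)); lra|auto]. }
    pose proof (is_lim_seq_mult' _ _ _ _ Ca Hl) as Hl2.
    pose proof (is_lim_seq_le _ _ _ _ (fun n => Rlt_le _ _ (proj2 (HC (d n)))) Hl2 (is_lim_seq_const 1)) as Hle.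
    simpl in Hle. rewrite Pcs in Hle. lra. }
  assert (PhiPos : forall x, 0 < x < L -> 0 < Phi x).
  { intros x Hx. destruct (BPh x Hx) as [[? ?] _]. destruct (Req_dec (Phi x) 0) as [E|E]; [|lra].
    exfalso. apply NZ.
    assert (D0 : Phi1 x = 0).
    { apply (deriv_min0 L Phi x); auto. intros y Hy. rewrite E. apply (BPh y Hy). }
    apply (uniq_lin L (1 + a) Phi Phi1 Phi2 x); auto. lra.
    intros y Hy. unfold Phi2. rewrite Rabs_Ropp, Rabs_mult. destruct (BPh y Hy) as [[? ?] [? ?]].
    assert (Rabs (1 - a * Psi y - Phi y) <= 1 + a) by (unfold Rabs; destruct (Rcase_abs _); nra).
    pose proof (Rabs_pos (Phi y)). nra. }
  assert (PsiPos : forall x, 0 < x < L -> 0 < Psi x).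
  { intros x Hx. destruct (BPh x Hx) as [_ [? ?]]. destruct (Req_dec (Psi x) 0) as [E|E]; [|lra].
    exfalso.
    assert (D0 : Psi1 x = 0).
    { apply (deriv_min0 L Psi x); auto. intros y Hy. rewrite E. apply (BPh y Hy). }
    assert (Z : forall y, 0 < y < L -> Psi y = 0).
    { apply (uniq_lin L (1 + b) Psi Psi1 Psi2 x); auto. lra.
      intros y Hy. unfold Psi2. rewrite Rabs_Ropp, Rabs_mult. destruct (BPh y Hy) as [[? ?] [? ?]].
      assert (Rabs (1 - b * Phi y - Psi y) <= 1 + b) by (unfold Rabs; destruct (Rcase_abs _); nra).
      pose proof (Rabs_pos (Psi y)). nra. }
    destruct (approx_in L Psi 0 (1/2) HL ContS) as [y [Hy [_ Hy2]]]; [lra|lra|].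
    rewrite (Z y Hy), S0 in Hy2. unfold Rabs in Hy2; destruct (Rcase_abs _); lra. }
  assert (PhiLt : forall x, 0 < x < L -> Phi x < 1).
  { intros x Hx. destruct (BPh x Hx) as [[? ?] _]. destruct (Req_dec (Phi x) 1) as [E|E]; [|lra].
    exfalso.
    assert (D0 : Phi1 x = 0).
    { apply (deriv_max0 L Phi x); auto. intros y Hy. rewrite E. apply (BPh y Hy). }
    destruct (second_test L Phi Phi1 x (Phi2 x) Hx DPh (DPh1 x Hx)) as [y [Hy Hy2]]; auto.
    unfold Phi2. rewrite E. pose proof (PsiPos x Hx). nra.
    destruct (BPh y Hy) as [[? ?] _]. lra. }
  assert (PsiLt : forall x, 0 < x < L -> Psi x < 1).
  { intros x Hx. destruct (BPh x Hx) as [_ [? ?]]. destruct (Req_dec (Psi x) 1) as [E|E]; [|lra].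
    exfalso.
    assert (D0 : Psi1 x = 0).
    { apply (deriv_max0 L Psi x); auto. intros y Hy. rewrite E. apply (BPh y Hy). }
    destruct (second_test L Psi Psi1 x (Psi2 x) Hx DPs (DPs1 x Hx)) as [y [Hy Hy2]]; auto.
    unfold Psi2. rewrite E. pose proof (PhiPos x Hx). nra.
    destruct (BPh y Hy) as [_ [? ?]]. lra. }
  exists (BD Phi Psi Phi1 Phi2 Psi1 Psi2). unfold bgood; simpl.
  split; [auto|split; [auto|split; [auto|split; [auto|]]]].
  split. { intros x Hx. unfold Phi2, Psi2. split; ring. }
  split; [auto|split; [auto|split; [auto|split; [auto|]]]].
  intros x Hx. split; split; auto.
Qed.

Theorem proposition2 (L : R) (an bn : nat -> R) (a b : R) :
  0 < L ->
  (forall n, 0 < an n /\ Rmax (an n) 1 < bn n) ->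
  (forall n, barrier_exists L (an n) (bn n)) ->
  is_lim_seq an a -> is_lim_seq bn b ->
  0 < a -> Rmax a 1 < b -> 1 < a ->
  barrier_exists L a b.
Proof.
  intros HL Hab Hbar Ha Hb Ha0 Hb1 Ha1.
  assert (Hb0 : 0 < b) by (pose proof (Rmax_r a 1); lra).
  pose proof Ha as Ha'. pose proof Hb as Hb'.
  apply is_lim_seq_Reals in Ha'. apply is_lim_seq_Reals in Hb'.
  destruct (Ha' 1 ltac:(lra)) as [N1 HN1]. destruct (Hb' 1 ltac:(lra)) as [N2 HN2].
  set (N := (N1 + N2)%nat).
  apply bgood_iff.
  apply (core L (fun n => an (n + N)%nat) (fun n => bn (n + N)%nat) a b (a + 1) (b + 1)); auto.
  - intros n. specialize (HN1 (n + N)%nat ltac:(unfold N; lia)). specialize (HN2 (n + N)%nat ltac:(unfold N; lia)).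
    unfold R_dist in *. destruct (Hab (n + N)%nat) as [H1 H2]. pose proof (Rmax_r (an (n + N)%nat) 1).
    unfold Rabs in *; repeat destruct (Rcase_abs _); lra.
  - intros n. apply bgood_iff. apply Hbar.
  - apply (is_lim_seq_incr_n an N a). exact Ha.
  - apply (is_lim_seq_incr_n bn N b). exact Hb.
Qed.
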